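(* There exist continuous functions $f_1,f_2:\mathrm{SO}(2)\to\mathbb{R}$ such that for every rotation $R\in\mathrm{SO}(2)$, at least one of $f_1(R)$ and $f_2(R)$ is a correct rotation angle of $R$, i.e. $\rho(f_1(R))=R$ or $\rho(f_2(R))=R$.
   Context: For $\theta\in\mathbb{R}$, $\rho(\theta)=\begin{bmatrix}\cos\theta&-\sin\theta\\ \sin\theta&\cos\theta\end{bmatrix}\in\mathrm{SO}(2)$ denotes the rotation of angle $\theta$. *)

(* Defs.v *)
From HB Require Import structures.
From mathcomp Require Import all_boot all_order all_algebra.
From mathcomp Require Import all_classical all_reals all_analysis.
Set Implicit Arguments. Unset Strict Implicit. Unset Printing Implicit Defensive.
Import Order.TTheory GRing.Theory Num.Theory.
Import numFieldTopology.Exports numFieldNormedType.Exports.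
Local Open Scope ring_scope.
Local Open Scope classical_set_scope.

Definition rho {R : realType} (t : R) : 'M[R]_2 :=
  \matrix_(i < 2, j < 2)
    if i == 0 then (if j == 0 then cos t else - sin t)
    else (if j == 0 then sin t else cos t).

Definition SO2 {R : realType} : set 'M[R]_2 :=
  [set A | A^T *m A = 1%:M /\ \det A = 1].

(* Main.v *)
Require Import Defs.
From HB Require Import structures.
From mathcomp Require Import all_boot all_order all_algebra.
From mathcomp Require Import all_classical all_reals all_analysis.
From mathcomp Require Import ring lra.
Import Order.TTheory GRing.Theory Num.Theory.
Import numFieldTopology.Exports numFieldNormedType.Exports.
Local Open Scope ring_scope.
Local Open Scope classical_set_scope.
Lemma det22 (R : comRingType) (A : 'M[R]_2) : \det A = A 0 0 * A 1 1 - A 0 1 * A 1 0.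
Proof.
rewrite (expand_det_row _ 0) !big_ord_recr big_ord0 /= /cofactor !det_mx11 !mxE /=.
have e1 : widen_ord (leqnSn 1) ord_max = 0 :> 'I_2 by apply/val_inj.
have e2 : lift 0 (0 : 'I_1) = 1 :> 'I_2 by apply/val_inj.
have e3 : lift (ord_max : 'I_2) (0 : 'I_1) = 0 :> 'I_2 by apply/val_inj.
have e4 : ord_max = 1 :> 'I_2 by apply/val_inj.
rewrite e1 e2 e3 e4 expr0 expr1; ring.
Qed.
Lemma mul22 (R : comRingType) (A B : 'M[R]_2) i j : (A *m B) i j = A i 0 * B 0 j + A i 1 * B 1 j.
Proof.
rewrite mxE !big_ord_recr big_ord0 /= add0r.
have e1 : widen_ord (leqnSn 1) ord_max = 0 :> 'I_2 by apply/val_inj.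
have e4 : ord_max = 1 :> 'I_2 by apply/val_inj.
by rewrite e1 e4.
Qed.
Lemma cont_g (R : realType) (sg : R) : continuous (fun A : 'M[R]_2 => atan (sg * A 1 0 / (1 + `|A 0 0|))).
Proof.
move=> A.
apply: (@continuous_comp _ _ _ (fun A : 'M[R]_2 => sg * A 1 0 / (1 + `|A 0 0|)) atan); last exact: continuous_atan.
have FA : Filter (nbhs A) := nbhs_filter A.
have c10 := @coord_continuous R 2 2 1 0 A.
have c00 := @coord_continuous R 2 2 0 0 A.
have hd : (fun B : 'M[R]_2 => 1 + `|B 0 0|) @ A --> 1 + `|A 0 0|.
  exact: (cvgD (cvg_cst _) (cvg_norm c00)).
have hn : (1 + `|A 0 0|) != 0 by rewrite gt_eqF // ltr_pwDl.
have H2 := cvgV hn hd.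
have H1 := cvgM (cvg_cst sg) c10.
exact: (@cvgM _ _ _ FA _ _ _ _ (H1 FA FA) (H2 FA)).
Qed.
Lemma half_angle (R : realType) (c s : R) : c ^+ 2 + s ^+ 2 = 1 -> 0 <= c ->
  cos (2 * atan (s / (1 + c))) = c /\ sin (2 * atan (s / (1 + c))) = s.
Proof.
move=> h1 h0.
have hc1 : 1 + c != 0 by rewrite gt_eqF // ltr_pwDl.
have hs : s ^+ 2 = 1 - c ^+ 2 by rewrite -h1; ring.
have hx : 1 + (s / (1 + c)) ^+ 2 = 2 / (1 + c).
  apply: (mulfI hc1); rewrite expr_div_n hs; field => //.
have ct : cos (atan (s / (1 + c))) ^+ 2 = (1 + c) / 2.
  rewrite cos_atan exprVn sqr_sqrtr; last by rewrite addr_ge0 // sqr_ge0.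
  by rewrite hx invf_div.
have cn : cos (atan (s / (1 + c))) != 0 by rewrite cos_atan invr_eq0 sqrtr_eq0 -ltNge ltr_pwDl // sqr_ge0.
have ht := atanK (s / (1 + c)).
move: ct cn ht.
move: (atan (s / (1 + c))) => t ct cn ht.
have st : sin t = (s / (1 + c)) * cos t by rewrite -ht /tan mulfVK.
have -> : (2 : R) * t = t + t by ring.
rewrite cosD sinD st.
split.
  have -> : cos t * cos t - s / (1 + c) * cos t * (s / (1 + c) * cos t) = (1 - (s / (1 + c))^+2) * cos t ^+ 2 by ring.
  rewrite ct expr_div_n hs; field => //.
have -> : s / (1 + c) * cos t * cos t + cos t * (s / (1 + c) * cos t) = 2 * (s / (1 + c)) * cos t ^+ 2 by ring.
rewrite ct; field => //.
Qed.

Lemma rho_eq (R : realType) (A : 'M[R]_2) t :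
  cos t = A 0 0 -> sin t = A 1 0 -> A 0 1 = - A 1 0 -> A 1 1 = A 0 0 -> rho t = A.
Proof.
move=> hc hs h01 h11; apply/matrixP => i j; rewrite !mxE.
case: i => [[|[|//]] hi]; case: j => [[|[|//]] hj] /=.
- by rewrite hc; congr (A _ _); apply/val_inj.
- have -> : Ordinal hi = 0 by apply/val_inj.
  have -> : Ordinal hj = 1 by apply/val_inj.
  by rewrite hs h01.
- by rewrite hs; congr (A _ _); apply/val_inj.
- have -> : Ordinal hi = 1 by apply/val_inj.
  have -> : Ordinal hj = 1 by apply/val_inj.
  by rewrite hc h11.
Qed.

Theorem theorem4 (R : realType) :
  exists f1 f2 : 'M[R]_2 -> R,
    {within SO2, continuous f1} /\ {within SO2, continuous f2} /\
    (forall A : 'M[R]_2, SO2 A -> rho (f1 A) = A \/ rho (f2 A) = A).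
Proof.
exists (fun A => 2 * atan (1 * A 1 0 / (1 + `|A 0 0|))).
exists (fun A => pi + 2 * atan ((-1) * A 1 0 / (1 + `|A 0 0|))).
split; [|split].
- apply: continuous_subspaceT => A.
  have FA : Filter (nbhs A) := nbhs_filter A.
  exact: (@cvgM _ _ _ FA _ _ _ _ (cvg_cst _) (cont_g R 1 A)).
- apply: continuous_subspaceT => A.
  have FA : Filter (nbhs A) := nbhs_filter A.
  exact: (@cvgD _ _ _ _ FA _ _ _ _ (cvg_cst _) (@cvgM _ _ _ FA _ _ _ _ (cvg_cst _) (cont_g R (-1) A))).
move=> A [hT hd].
have e00 := congr1 (fun M : 'M[R]_2 => M 0 0) hT.
have e01 := congr1 (fun M : 'M[R]_2 => M 0 1) hT.
move: e00 e01 hd => /=; rewrite !mul22 !mxE det22 /= => e00 e01 hd.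
have h01 : A 0 1 = - A 1 0.
  apply/eqP; rewrite -subr_eq0; apply/eqP.
  transitivity (A 0 1 * (1 - (A 0 0 * A 0 0 + A 1 0 * A 1 0)) + A 1 0 * (1 - (A 0 0 * A 1 1 - A 0 1 * A 1 0)) + A 0 0 * (A 0 0 * A 0 1 + A 1 0 * A 1 1)); first ring.
  by rewrite e00 e01 hd; ring.
have h11 : A 1 1 = A 0 0.
  apply/eqP; rewrite -subr_eq0; apply/eqP.
  transitivity (A 1 1 * (1 - (A 0 0 * A 0 0 + A 1 0 * A 1 0)) - A 0 0 * (1 - (A 0 0 * A 1 1 - A 0 1 * A 1 0)) + A 1 0 * (A 0 0 * A 0 1 + A 1 0 * A 1 1)); first ring.
  by rewrite e00 e01 hd; ring.
have hcs : A 0 0 ^+ 2 + A 1 0 ^+ 2 = 1 by rewrite !expr2.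
case: (lerP 0 (A 0 0)) => hc.
- left; rewrite mul1r ger0_norm //.
  have [hc1 hs1] := @half_angle R _ _ hcs hc.
  exact: rho_eq.
- right; rewrite ltr0_norm // mulN1r.
  have hcs' : (- A 0 0) ^+ 2 + (- A 1 0) ^+ 2 = 1 by rewrite !sqrrN.
  have [hc1 hs1] := @half_angle R _ _ hcs' ltac:(by rewrite oppr_ge0 ltW).
  apply: rho_eq => //.
  + by rewrite addrC cosDpi hc1 opprK.
  + by rewrite addrC sinDpi hs1 opprK.
Qed.
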